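(* Let $\mu$ be a PTP-monotone. If $A\in H_n$ and $B\in H_k$ satisfy $\|A_+\|_1=\|B_+\|_1$ and $\|A_-\|_1=\|B_-\|_1$, then $\mu(A)=\mu(B)$; i.e. $\mu(A)$ is a function of $(\|A_+\|_1,\|A_-\|_1)$.
   Context: $H_n$ denotes the $n\times n$ complex Hermitian matrices. A linear map $\Phi:H_n\to H_k$ is PTP if it maps positive semidefinite matrices to positive semidefinite matrices and $\operatorname{tr}\Phi(X)=\operatorname{tr}X$ for all $X$. A function $\mu:\bigcup_{n\in\mathbb N}H_n\to\mathbb R$ is a PTP-monotone if $\mu(\Phi(A))\leq\mu(A)$ for all $n,k$, all PTP maps $\Phi:H_n\to H_k$ and all $A\in H_n$. Every $A$ decomposes uniquely as $A=A_+-A_-$ with $A_\pm$ positive semidefinite and $A_+A_-=0$. $\|\cdot\|_1$ is the trace norm. *)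

(* Defs.v *)
From HB Require Import structures.
From mathcomp Require Import all_boot all_order all_algebra.
From mathcomp Require Import boolp classical_sets reals.
From mathcomp Require Import complex.
Set Implicit Arguments. Unset Strict Implicit. Unset Printing Implicit Defensive.
Import Order.TTheory GRing.Theory Num.Theory.
Local Open Scope ring_scope.

Definition adjmx (R : realType) (m n : nat) (A : 'M[R[i]]_(m, n)) : 'M[R[i]]_(n, m) :=
  map_mx (fun z => (z^*)%C) A^T.

Definition is_hermitian (R : realType) (n : nat) (A : 'M[R[i]]_n) : Prop :=
  adjmx A = A.

Definition is_psd (R : realType) (n : nat) (A : 'M[R[i]]_n) : Prop :=
  is_hermitian A /\ forall v : 'cV[R[i]]_n, 0 <= (adjmx v *m A *m v) 0 0.

(* trace norm ||X||_1 = tr |X|, |X| = the (unique) PSD square root of X^* X *)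
Definition trnorm (R : realType) (n : nat) (X : 'M[R[i]]_n) : R :=
  @complex.Re R (\tr (xget 0 [set S : 'M[R[i]]_n | is_psd S /\ S *m S = adjmx X *m X])).

Definition pos_neg_parts (R : realType) (n : nat) (A P N : 'M[R[i]]_n) : Prop :=
  [/\ is_psd P, is_psd N, A = P - N & P *m N = 0].

(* PTP maps H_(n+1) -> H_(k+1): real-linear, positivity- and trace-preserving.
   Phi is given on all matrices but only its restriction to H_n matters. *)
Definition PTP (R : realType) (n k : nat) (Phi : 'M[R[i]]_n.+1 -> 'M[R[i]]_k.+1) : Prop :=
  [/\ (forall X, is_hermitian X -> is_hermitian (Phi X)),
      (forall (a : R) X Y, is_hermitian X -> is_hermitian Y ->
          Phi (a%:C%C *: X + Y) = a%:C%C *: Phi X + Phi Y),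
      (forall X, is_psd X -> is_psd (Phi X)) &
      (forall X, is_hermitian X -> \tr (Phi X) = \tr X)].

(* mu : U_{n >= 1} H_n -> R, given on all square matrices of size n.+1 *)
Definition PTP_monotone (R : realType) (mu : forall n : nat, 'M[R[i]]_n.+1 -> R) : Prop :=
  forall (n k : nat) (Phi : 'M[R[i]]_n.+1 -> 'M[R[i]]_k.+1),
    PTP Phi -> forall A, is_hermitian A -> mu k (Phi A) <= mu n A.

(* Main.v *)
Require Import Defs.
From HB Require Import structures.
From mathcomp Require Import all_boot all_order all_algebra.
From mathcomp Require Import boolp classical_sets reals.
From mathcomp Require Import complex.
From mathcomp Require Import ring lra.
Import Order.TTheory GRing.Theory Num.Theory.
Local Open Scope ring_scope.
Set Implicit Arguments. Unset Strict Implicit. Unset Printing Implicit Defensive.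

Section Aux.
Variable R : realType.
Local Notation C := (R[i]).

Lemma adjmxE m n (A : 'M[C]_(m, n)) : adjmx A = map_mx (@conjc R) A^T.
Proof. by []. Qed.

Lemma adjmxK m n (A : 'M[C]_(m, n)) : adjmx (adjmx A) = A.
Proof. by apply/matrixP=> i j; rewrite !mxE conjcK. Qed.

Lemma adjmxM m n p (A : 'M[C]_(m, n)) (B : 'M[C]_(n, p)) :
  adjmx (A *m B) = adjmx B *m adjmx A.
Proof. by rewrite !adjmxE trmx_mul map_mxM. Qed.

Lemma adjmxD m n (A B : 'M[C]_(m, n)) : adjmx (A + B) = adjmx A + adjmx B.
Proof. by rewrite !adjmxE linearD map_mxD. Qed.

Lemma adjmxN m n (A : 'M[C]_(m, n)) : adjmx (- A) = - adjmx A.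
Proof. by rewrite !adjmxE linearN map_mxN. Qed.

Lemma adjmxB m n (A B : 'M[C]_(m, n)) : adjmx (A - B) = adjmx A - adjmx B.
Proof. by rewrite adjmxD adjmxN. Qed.

Lemma adjmxZ m n (c : C) (A : 'M[C]_(m, n)) : adjmx (c *: A) = (c^*)%C *: adjmx A.
Proof. by apply/matrixP=> i j; rewrite !mxE rmorphM. Qed.

Lemma adjmx0 m n : adjmx (0 : 'M[C]_(m, n)) = 0.
Proof. by apply/matrixP=> i j; rewrite !mxE conjc0. Qed.

Lemma adjmx1 n : adjmx (1%:M : 'M[C]_n) = 1%:M.
Proof. by apply/matrixP=> i j; rewrite !mxE conjc_nat eq_sym. Qed.

Lemma tr_adjmx n (A : 'M[C]_n) : \tr (adjmx A) = (\tr A)^*%C.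
Proof. rewrite /mxtrace rmorph_sum; apply: eq_bigr=> i _; by rewrite !mxE. Qed.

Lemma ge0_conj (x : C) : 0 <= x -> x^*%C = x.
Proof.
move=> hx; have h := ger0_Im hx.
by case: x h {hx} => a b /= ->; rewrite /conjc oppr0.
Qed.

Lemma mulJ_ge0 (x : C) : 0 <= x^*%C * x.
Proof. by rewrite mulrC mulcJ_ge0. Qed.

Lemma mulJ_eq0 (x : C) : x^*%C * x = 0 -> x = 0.
Proof. by move/eqP; rewrite mulf_eq0 conjc_eq0 orbb => /eqP. Qed.

Lemma adjmx_diag m n (X : 'M[C]_(m, n)) j :
  (adjmx X *m X) j j = \sum_i (X i j)^*%C * X i j.
Proof. by rewrite !mxE; apply: eq_bigr=> i _; rewrite !mxE. Qed.

Lemma adjmx_diag_ge0 m n (X : 'M[C]_(m, n)) j : 0 <= (adjmx X *m X) j j.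
Proof. by rewrite adjmx_diag sumr_ge0 // => i _; apply: mulJ_ge0. Qed.

Lemma adjmx_col0 m n (X : 'M[C]_(m, n)) j : (adjmx X *m X) j j = 0 -> forall i, X i j = 0.
Proof.
rewrite adjmx_diag => h i; apply: mulJ_eq0.
by apply: (psumr_eq0P _ h) => // k _; apply: mulJ_ge0.
Qed.

Lemma adjmx_eq0 m n (X : 'M[C]_(m, n)) : adjmx X *m X = 0 -> X = 0.
Proof.
move=> h; apply/matrixP=> i j; rewrite mxE; apply: (@adjmx_col0 _ _ X j _ i).
by rewrite h mxE.
Qed.

Lemma adjmx_eq0' m n (X : 'M[C]_(m, n)) : X *m adjmx X = 0 -> X = 0.
Proof.
move=> h; rewrite -[X]adjmxK (@adjmx_eq0 _ _ (adjmx X)) ?adjmx0 //.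
by rewrite adjmxK.
Qed.


Lemma e_add m n (X Y : 'M[C]_(m,n)) i j : (X + Y) i j = X i j + Y i j.
Proof. by rewrite mxE. Qed.
Lemma e_opp m n (X : 'M[C]_(m,n)) i j : (- X) i j = - X i j.
Proof. by rewrite mxE. Qed.
Lemma e_scale m n c (X : 'M[C]_(m,n)) i j : (c *: X) i j = c * X i j.
Proof. by rewrite mxE. Qed.

Lemma psd_null n (M : 'M[C]_n) (v : 'cV[C]_n) : is_psd M ->
  (adjmx v *m M *m v) 0 0 = 0 -> M *m v = 0.
Proof.
move=> [hM pM] h0.
set u := M *m v.
have adju : adjmx u = adjmx v *m M by rewrite adjmxM hM.
have key : forall t : C, t^*%C = t ->
  adjmx (v - t *: u) *m M *m (v - t *: u) =
  adjmx v *m M *m v - (t *: (adjmx u *m u)) *+ 2 + (t * t) *: (adjmx u *m M *m u).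
  move=> t ht.
  rewrite adjmxB adjmxZ ht mulmxBl mulmxBl !mulmxBr -!scalemxAl -!scalemxAr scalerA.
  have -> : adjmx v *m M *m u = adjmx u *m u by rewrite adju.
  have -> : adjmx u *m M *m v = adjmx u *m u by rewrite -mulmxA.
  by rewrite mulr2n opprB opprD !addrA addrAC.
set a := (adjmx u *m u) 0 0; set b := (adjmx u *m M *m u) 0 0.
have a0 : 0 <= a by apply: adjmx_diag_ge0.
have b0 : 0 <= b by apply: pM.
suff a_eq0 : a = 0.
  by apply/matrixP=> i j; rewrite (ord1 j) [RHS]mxE; exact: (adjmx_col0 a_eq0 i).
have b1p : 0 < b + 1 by rewrite ltr_wpDl // ltr01.
have b1 : b + 1 != 0 by rewrite gt_eqF.
set t := a / (b + 1).
have ht : t^*%C = t by apply: ge0_conj; rewrite divr_ge0 // ltW.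
have := pM (v - t *: u); rewrite key // mulr2n !(e_add, e_opp, e_scale) h0 -/a -/b.
have -> : 0 - (t * a + t * a) + t * t * b = - (a ^+ 2 * (b + 2%:R) / (b + 1) ^+ 2).
  by rewrite /t; field.
rewrite oppr_ge0 => h; case: (eqVneq a 0) => // an0.
have ap : 0 < a by rewrite lt0r an0 a0.
have : 0 < a ^+ 2 * (b + 2%:R) / (b + 1) ^+ 2.
  by rewrite divr_gt0 ?exprn_gt0 // mulr_gt0 ?exprn_gt0 // ltr_wpDl // ltr0n.
by move=> /lt_le_trans /(_ h); rewrite ltxx.
Qed.

Lemma quad_col n m (M : 'M[C]_n) (P : 'M[C]_(n, m)) j :
  (adjmx P *m M *m P) j j = (adjmx (col j P) *m M *m col j P) 0 0.
Proof.
rewrite !mxE; apply: eq_bigr => l _; rewrite !mxE; congr (_ * _).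
by apply: eq_bigr => k _; rewrite !mxE.
Qed.

Lemma tr_quad_ge0 n m (M : 'M[C]_n) (P : 'M[C]_(n, m)) : is_psd M ->
  0 <= \tr (adjmx P *m M *m P).
Proof.
move=> [_ pM]; rewrite /mxtrace sumr_ge0 // => j _; rewrite quad_col; exact: pM.
Qed.

Lemma tr_quad_eq0 n m (M : 'M[C]_n) (P : 'M[C]_(n, m)) : is_psd M ->
  \tr (adjmx P *m M *m P) = 0 -> M *m P = 0.
Proof.
move=> hM h; apply/matrixP => i j.
have hj : (adjmx (col j P) *m M *m col j P) 0 0 = 0.
  rewrite -quad_col; apply: (psumr_eq0P _ h) => // k _.
  by rewrite quad_col; case: hM => _; apply.
have := psd_null hM hj => /matrixP /(_ i 0) h'.
rewrite !mxE in h' *; apply: etrans h'; apply: eq_bigr => k _; by rewrite mxE.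
Qed.

Lemma psd_tr0 n (M : 'M[C]_n) : is_psd M -> \tr M = 0 -> M = 0.
Proof.
move=> hM h; have := @tr_quad_eq0 n n M 1%:M hM.
by rewrite adjmx1 mul1mx !mulmx1 => ->.
Qed.

Lemma psd_tr_ge0 n (M : 'M[C]_n) : is_psd M -> 0 <= \tr M.
Proof.
by move=> hM; have := @tr_quad_ge0 n n M 1%:M hM; rewrite adjmx1 mul1mx mulmx1.
Qed.

Lemma ge0_Re (x : C) : 0 <= x -> real_complex R (complex.Re x) = x.
Proof. by move=> hx; have h := ger0_Im hx; case: x h {hx} => a b /= ->. Qed.

Lemma sqrt_uniq n (S T : 'M[C]_n) : is_psd S -> is_psd T ->
  S *m S = T *m T -> S = T.
Proof.
move=> hS hT hST.
set D := S - T.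
have hD : adjmx D = D by rewrite adjmxB hS.1 hT.1.
have e1 : S *m D = - (D *m T).
  apply/eqP; rewrite -subr_eq0 opprK mulmxBr mulmxBl hST.
  by rewrite addrA subrK subrr.
have e2 : \tr (adjmx D *m S *m D) = - \tr (adjmx D *m T *m D).
  rewrite hD -mulmxA e1 mulmxN linearN /=; congr (- _).
  by rewrite mxtrace_mulC -!mulmxA.
have g1 := tr_quad_ge0 D hS; have g2 := tr_quad_ge0 D hT.
have z2 : \tr (adjmx D *m T *m D) = 0.
  apply/eqP; rewrite eq_le g2 andbT -oppr_ge0 -e2 //.
have z1 : \tr (adjmx D *m S *m D) = 0 by rewrite e2 z2 oppr0.
have sD := tr_quad_eq0 hS z1; have tD := tr_quad_eq0 hT z2.
have DD : adjmx D *m D = 0 by rewrite hD {1}/D mulmxBl sD tD subrr.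
by apply/eqP; rewrite -subr_eq0 -/D (adjmx_eq0 DD).
Qed.

Lemma trnorm_psd n (P : 'M[C]_n.+1) : is_psd P -> real_complex R (trnorm P) = \tr P.
Proof.
move=> hP; rewrite /trnorm.
have hadj : adjmx P *m P = P *m P by rewrite hP.1.
rewrite (@xget_unique _ 0 _ P); last first.
- by move=> S [hS eS]; apply: sqrt_uniq => //; rewrite eS hadj.
- by split.
- by rewrite ge0_Re // psd_tr_ge0.
Qed.


Lemma proj_exists n (Ap Am : 'M[C]_n) : is_hermitian Ap -> is_hermitian Am ->
  Ap *m Am = 0 ->
  exists Q : 'M[C]_n, [/\ adjmx Q = Q, Q *m Q = Q, Ap *m Q = Ap & Am *m Q = 0].
Proof.
move=> hp hm hpm.
have [r [W [Wf s1 s2]]] : exists r, exists W : 'M[C]_(r, n),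
    [/\ row_free W, (Ap <= W)%MS & (W <= Ap)%MS].
  by exists (\rank Ap), (row_base Ap); rewrite row_base_free !eq_row_base.
set G := W *m adjmx W.
have Gu : G \in unitmx.
  rewrite -row_free_unit -kermx_eq0; apply/eqP.
  set K := kermx G; have hK : K *m G = 0 := mulmx_ker G.
  have : K *m W = 0.
    apply: adjmx_eq0'.
    by rewrite adjmxM mulmxA -(mulmxA K) -/G hK mul0mx.
  by move/eqP; rewrite mulmx_free_eq0 // => /eqP.
set H := invmx G.
have hG : adjmx G = G by rewrite adjmxM adjmxK.
have hH : adjmx H = H.
  have e : G *m adjmx H = 1%:M by rewrite -hG -adjmxM mulVmx // adjmx1.
  by rewrite -[adjmx H]mul1mx -(mulVmx Gu) -mulmxA e mulmx1.
exists (adjmx W *m H *m W); split.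
- by rewrite !adjmxM hH adjmxK mulmxA.
- by rewrite -!mulmxA (mulmxA W) -/G (mulmxA H) mulVmx // mul1mx.
- rewrite -(mulmxKpV s1); move: (Ap *m pinvmx W) => Y.
  by rewrite -!mulmxA (mulmxA W) -/G (mulmxA G) mulmxV // mul1mx.
-   have hmp : Am *m Ap = 0 by rewrite -hp -hm -adjmxM hpm adjmx0.
  rewrite -{1}(mulmxKpV s2); move: (W *m pinvmx Ap) => Y.
  rewrite adjmxM hp !mulmxA hmp.
  by rewrite !mul0mx.
Qed.


Lemma psd_scale n (c : C) (M : 'M[C]_n) : 0 <= c -> is_psd M -> is_psd (c *: M).
Proof.
move=> hc [hM pM]; split.
  by rewrite /is_hermitian adjmxZ ge0_conj // hM.
move=> v; rewrite -scalemxAr -scalemxAl e_scale mulr_ge0 //; exact: pM.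
Qed.

Lemma psd_add n (M N : 'M[C]_n) : is_psd M -> is_psd N -> is_psd (M + N).
Proof.
move=> [hM pM] [hN pN]; split.
  by rewrite /is_hermitian adjmxD hM hN.
move=> v; rewrite mulmxDr mulmxDl e_add addr_ge0 //.
Qed.

Lemma density n (P : 'M[C]_n.+1) : is_psd P ->
  exists D : 'M[C]_n.+1, [/\ is_psd D, \tr D = 1 & \tr P *: D = P].
Proof.
move=> hP; case: (eqVneq (\tr P) 0) => h.
  have psd1 : is_psd (1%:M : 'M[C]_n.+1).
    split; first exact: adjmx1.
    by move=> v; rewrite mulmx1 adjmx_diag_ge0.
  have n0 : (n.+1%:R : C) != 0 by rewrite pnatr_eq0.
  exists ((n.+1%:R)^-1 *: 1%:M); split.
  - by apply: psd_scale => //; rewrite invr_ge0 ler0n.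
  - by rewrite linearZ /= mxtrace1 mulVf.
  - by rewrite h scale0r (psd_tr0 hP h).
exists ((\tr P)^-1 *: P); split.
- by apply: psd_scale => //; rewrite invr_ge0 psd_tr_ge0.
- by rewrite linearZ /= mulVf.
- by rewrite scalerA mulfV // scale1r.
Qed.

Lemma tr_proj_ge0 n (P X : 'M[C]_n) : adjmx P = P -> P *m P = P -> is_psd X ->
  0 <= \tr (P *m X).
Proof.
move=> hP hPP hX.
have -> : \tr (P *m X) = \tr (adjmx P *m X *m P).
  by rewrite hP [RHS]mxtrace_mulC mulmxA hPP mxtrace_mulC.
exact: tr_quad_ge0.
Qed.

Lemma tr_herm_real n (P X : 'M[C]_n) : adjmx P = P -> adjmx X = X ->
  (\tr (P *m X))^*%C = \tr (P *m X).
Proof. by move=> hP hX; rewrite -tr_adjmx adjmxM hP hX mxtrace_mulC. Qed.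


Lemma transfer n k (A Ap Am : 'M[C]_n.+1) (B Bp Bm : 'M[C]_k.+1) :
  pos_neg_parts A Ap Am -> pos_neg_parts B Bp Bm ->
  \tr Ap = \tr Bp -> \tr Am = \tr Bm ->
  exists Phi : 'M[C]_n.+1 -> 'M[C]_k.+1, PTP Phi /\ Phi A = B.
Proof.
move=> [pAp pAm eA hApm] [pBp pBm eB _] tp tm.
have [Q [hQ QQ ApQ AmQ]] := proj_exists pAp.1 pAm.1 hApm.
have [Dp [pDp tDp eDp]] := density pBp.
have [Dm [pDm tDm eDm]] := density pBm.
set Q' := 1%:M - Q.
have hQ' : adjmx Q' = Q' by rewrite adjmxB adjmx1 hQ.
have QQ' : Q' *m Q' = Q'.
  by rewrite mulmxBl mul1mx mulmxBr mulmx1 QQ subrr subr0.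
exists (fun X => \tr (Q *m X) *: Dp + \tr (Q' *m X) *: Dm); split; last first.
  have t1 : \tr (Q *m Ap) = \tr Ap by rewrite mxtrace_mulC ApQ.
  have t2 : \tr (Q *m Am) = 0 by rewrite mxtrace_mulC AmQ linear0.
  rewrite eA eB /Q' !mulmxBr !mulmxBl !mul1mx !linearB /= t1 t2 subrr oppr0 !subr0 add0r.
  by rewrite tp tm addr0 eDp scaleNr eDm.
split.
- move=> X hX; rewrite /is_hermitian adjmxD !adjmxZ.
  by rewrite !tr_herm_real // pDp.1 pDm.1.
- move=> a X Y _ _.
  rewrite !mulmxDr -!scalemxAr !linearD !linearZ /=.
  by rewrite !scalerDl !scalerA (mulrC (\tr (Q *m X))) (mulrC (\tr (Q' *m X))) addrACA.
- move=> X hX; apply: psd_add; apply: psd_scale => //; exact: tr_proj_ge0.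
- move=> X hX; rewrite linearD !linearZ /= tDp tDm !mulr1 /Q' mulmxBl mul1mx linearB /=.
  by rewrite addrC subrK.
Qed.

Lemma psd_tr_eq n k (P : 'M[C]_n.+1) (P' : 'M[C]_k.+1) : is_psd P -> is_psd P' ->
  trnorm P = trnorm P' -> \tr P = \tr P'.
Proof. by move=> h h' e; rewrite -trnorm_psd // -trnorm_psd // e. Qed.

End Aux.

Unset Implicit Arguments.

Theorem mainTheorem13 (R : realType) (mu : forall n : nat, 'M[complex R]_n.+1 -> R)
  (Hmu : PTP_monotone mu)
  (n k : nat) (A Ap Am : 'M[complex R]_n.+1) (B Bp Bm : 'M[complex R]_k.+1) :
  is_hermitian A -> is_hermitian B ->
  pos_neg_parts A Ap Am -> pos_neg_parts B Bp Bm ->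
  trnorm Ap = trnorm Bp -> trnorm Am = trnorm Bm ->
  mu n A = mu k B.
Proof.
move=> hA hB pA pB ep em.
have [hAp hAm _ _] := pA; have [hBp hBm _ _] := pB.
have tp := psd_tr_eq hAp hBp ep.
have tm := psd_tr_eq hAm hBm em.
have [Phi [hPhi ePhi]] := transfer pA pB tp tm.
have [Psi [hPsi ePsi]] := transfer pB pA (esym tp) (esym tm).
apply/le_anti/andP; split.
- by rewrite -ePsi; apply: Hmu.
- by rewrite -ePhi; apply: Hmu.
Qed.
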